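(* Let $M>0$, $\delta_0>0$ and $l_0\in\mathbb{R}$, and let $w_0\in L^\infty((-\infty,l_0])$ satisfy $w_0(x)=0$ for all sufficiently large negative $x$. Let $w$ be the (bounded) solution of $w_t=w_{xx}-Mw_x^2$ for $x<l_0$, $t>0$, with $w(x,0)=w_0(x)$ for $x\le l_0$ and $w(l_0,t)=\delta_0$ for $t\ge0$. Then $w(x,t)\to\delta_0$ as $t\to\infty$ locally uniformly in $x\in(-\infty,l_0]$. *)

(* Defs.v *)
From HB Require Import structures.
From mathcomp Require Import all_boot all_order all_algebra.
From mathcomp Require Import all_classical all_reals all_analysis.
Set Implicit Arguments. Unset Strict Implicit. Unset Printing Implicit Defensive.
Import Order.TTheory GRing.Theory Num.Theory.
Import numFieldNormedType.Exports.
Local Open Scope classical_set_scope.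
Local Open Scope ring_scope.

(* w0 is an L^oo function on (-oo, l0]: measurable and bounded
   (we take a bounded representative of the L^oo class). *)
Definition Linfty_halfline (R : realType) (l0 : R) (w0 : R -> R) : Prop :=
  measurable_fun `]-oo, l0] w0 /\ exists C : R, forall x, x <= l0 -> `|w0 x| <= C.

Definition vanishes_at_minus_infty (R : realType) (w0 : R -> R) : Prop :=
  exists L : R, forall x, x <= L -> w0 x = 0.

Definition dx (R : realType) (w : R -> R -> R) (x t : R) : R :=
  derive1 (fun y => w y t) x.

(* Bounded classical solution of
     w_t = w_xx - M w_x^2   (x < l0, t > 0),
     w(x,0) = w0(x)  (x <= l0),     w(l0,t) = delta0  (t >= 0).
   w is C^{2,1}-type classical in the open quarter-plane, continuous on
   {x <= l0, t > 0} up to the lateral boundary, and since w0 is only L^oo,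
   the initial datum is attained in L^1_loc((-oo,l0]) as t -> 0+. *)
Definition is_bounded_solution (R : realType) (M l0 delta0 : R)
    (w0 : R -> R) (w : R -> R -> R) : Prop :=
  [/\ (exists C : R, forall x t, x <= l0 -> 0 <= t -> `|w x t| <= C),
      (forall x t, x < l0 -> 0 < t ->
         [/\ derivable (fun y => w y t) x 1,
             (forall y, y < l0 -> derivable (fun z => w z t) y 1),
             derivable (fun y => dx w y t) x 1,
             derivable (fun s => w x s) t 1 &
             derive1 (fun s => w x s) t =
               derive1 (fun y => dx w y t) x - M * (dx w x t) ^+ 2]),
      {within [set p : R * R | p.1 <= l0 /\ 0 < p.2], continuous (fun p => w p.1 p.2)},
      (forall t, 0 <= t -> w l0 t = delta0) &
      ((forall x, x <= l0 -> w x 0 = w0 x) /\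
      (forall a, a <= l0 ->
         (fun t => (\int[lebesgue_measure]_(x in `[a, l0]) (`|w x t - w0 x|)%:E)%E)
           @ 0^'+ --> 0%E))].

Definition loc_unif_cvg_halfline (R : realType) (l0 : R) (w : R -> R -> R) (c : R)
  : Prop :=
  forall a, a <= l0 -> forall eps : R, 0 < eps ->
    exists T : R, forall t, T <= t -> forall x, a <= x -> x <= l0 ->
      `|w x t - c| < eps.

(* Main.v *)
Require Import Defs.
From HB Require Import structures.
From mathcomp Require Import all_boot all_order all_algebra.
From mathcomp Require Import all_classical all_reals all_analysis.
From mathcomp Require Import ring lra.
Import Order.TTheory GRing.Theory Num.Theory.
Import numFieldNormedType.Exports.
Local Open Scope classical_set_scope.
Local Open Scope ring_scope.

Section S.
Variable R : realType.

Lemma der_cvg (f : R -> R) (x d : R) : is_derive x 1 f d ->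
  (fun h => h^-1 * (f (h + x) - f x)) @ 0^' --> d.
Proof.
move=> H. have D := @ex_derive _ _ _ _ _ _ _ H.
have E := @derive_val _ _ _ _ _ _ _ H. rewrite /derive in E.
rewrite /derivable E in D.
apply: cvg_trans D; apply: near_eq_cvg; near=> h.
by rewrite /= [h%:A]mulr1.
Unshelve. all: by end_near. Qed.

Lemma der_near_gt (f : R -> R) (x d z : R) : is_derive x 1 f d -> z < d ->
  exists2 r : R, 0 < r & forall h, 0 < `|h| < r -> z < h^-1 * (f (h + x) - f x).
Proof.
move=> /der_cvg H zd. have := @cvgr_gt R _ _ _ _ _ H _ zd.
move=> [r /= r0 Hr]. exists r => // h /andP[h0 hr].
apply: Hr; last by rewrite -normr_gt0.
by rewrite /ball /= sub0r normrN.
Qed.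

Lemma der_near_lt (f : R -> R) (x d z : R) : is_derive x 1 f d -> d < z ->
  exists2 r : R, 0 < r & forall h, 0 < `|h| < r -> h^-1 * (f (h + x) - f x) < z.
Proof.
move=> /der_cvg H zd. have := @cvgr_lt R _ _ _ _ _ H _ zd.
move=> [r /= r0 Hr]. exists r => // h /andP[h0 hr].
apply: Hr; last by rewrite -normr_gt0.
by rewrite /ball /= sub0r normrN.
Qed.

Lemma der_cont (g : R -> R) (x d : R) : is_derive x 1 g d -> {for x, continuous g}.
Proof.
move=> H; apply: differentiable_continuous; apply/derivable1_diffP.
exact: (@ex_derive _ _ _ _ _ _ _ H).
Qed.

Lemma max_second (g dg : R -> R) (p q x d2 : R) : p < x -> x < q ->
  (forall y, p < y -> y < q -> is_derive y 1 g (dg y)) ->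
  is_derive x 1 dg d2 -> (forall y, p < y -> y < q -> g y <= g x) -> d2 <= 0.
Proof.
move=> px xq Hg Hdg Hmax.
have dgx0 : dg x = 0.
  have H0 : is_derive x 1 g 0.
    apply: (@derive1_at_max _ g p q x (ltW (lt_trans px xq))).
    - move=> t; rewrite in_itv /= => /andP[pt tq].
      exact: (@ex_derive _ _ _ _ _ _ _ (Hg t pt tq)).
    - by rewrite in_itv /= px xq.
    - by move=> t; rewrite in_itv /= => /andP[pt tq]; exact: Hmax.
  have E1 := @derive_val _ _ _ _ _ _ _ H0.
  have E2 := @derive_val _ _ _ _ _ _ _ (Hg x px xq).
  by rewrite -E2 E1.
rewrite leNgt; apply/negP => d2pos.
have [r r0 Hr] := @der_near_gt dg x d2 0 Hdg d2pos.
pose h0 := Num.min r (q - x) / 2.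
have h0pos : 0 < h0 by rewrite divr_gt0 // lt_min r0 subr_gt0 xq.
have h0r : h0 < r.
  rewrite /h0 ltr_pdivrMr // (@le_lt_trans _ _ r) ?ge_min ?lexx //.
  by rewrite ltr_pMr // ltr1n.
have h0q : x + h0 < q.
  rewrite -ltrBrDl /h0 ltr_pdivrMr // (@le_lt_trans _ _ (q - x)) ?ge_min ?lexx ?orbT //.
  by rewrite ltr_pMr ?subr_gt0 // ltr1n.
have xh : x < x + h0 by rewrite ltrDl.
have [c cin E] : exists2 c, c \in `]x, x + h0[%R & g (x + h0) - g x = dg c * (x + h0 - x).
  apply: MVT => //.
    by move=> y; rewrite in_itv /= => /andP[xy yh]; apply: Hg; [exact: lt_trans xy|exact: lt_trans h0q].
  apply: continuous_in_subspaceT => y; rewrite inE /= in_itv /= => /andP[xy yh].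
  apply: (@der_cont _ _ (dg y)); apply: Hg.
    exact: lt_le_trans xy.
  exact: le_lt_trans h0q.
move: cin; rewrite in_itv /= => /andP[xc ch].
have dgc : 0 < dg c.
  have cx0 : 0 < c - x by rewrite subr_gt0.
  have cxr : c - x < r by rewrite ltrBlDl (lt_trans ch) // ltrD2l.
  have H1 := Hr (c - x).
  rewrite subrK dgx0 subr0 gtr0_norm // cx0 cxr in H1.
  by have := H1 isT; rewrite pmulr_rgt0 // invr_gt0.
have := Hmax (x + h0) (lt_trans px xh) h0q.
rewrite -subr_le0 E addrAC subrr add0r.
by rewrite leNgt mulr_gt0.
Qed.

Lemma max_left (k : R -> R) (s0 t d : R) : s0 < t -> is_derive t 1 k d ->
  (forall s, s0 < s -> s <= t -> k s <= k t) -> 0 <= d.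
Proof.
move=> st Hk Hmax; rewrite leNgt; apply/negP => dneg.
have [r r0 Hr] := @der_near_lt k t d 0 Hk dneg.
pose h0 := Num.min r (t - s0) / 2.
have h0pos : 0 < h0 by rewrite divr_gt0 // lt_min r0 subr_gt0 st.
have h0r : h0 < r.
  rewrite /h0 ltr_pdivrMr // (@le_lt_trans _ _ r) ?ge_min ?lexx //.
  by rewrite ltr_pMr // ltr1n.
have h0s : s0 < t - h0.
  rewrite ltrBrDl -ltrBrDr /h0 ltr_pdivrMr // (@le_lt_trans _ _ (t - s0)) ?ge_min ?lexx ?orbT //.
  by rewrite ltr_pMr ?subr_gt0 // ltr1n.
have H1 := Hr (- h0).
rewrite normrN gtr0_norm // h0pos h0r addrC in H1.
have := H1 isT.
have := Hmax (t - h0) h0s; rewrite gerBl ltW // => /(_ isT).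
rewrite -subr_le0 => Hle.
by rewrite invrN mulNr oppr_lt0 (addrC (- k t)) (addrC (- h0)) pmulr_rgt0 ?invr_gt0 // ltNge Hle.
Qed.

Lemma comparison (F Fx Fxx Ft : R -> R -> R) (a b t0 T : R) :
  a <= b -> t0 <= T ->
  {within `[a, b] `*` `[t0, T], continuous (fun p : R * R => F p.1 p.2)} ->
  (forall x t, a < x -> x < b -> t0 < t -> t <= T -> is_derive x 1 (fun y => F y t) (Fx x t)) ->
  (forall x t, a < x -> x < b -> t0 < t -> t <= T -> is_derive x 1 (fun y => Fx y t) (Fxx x t)) ->
  (forall x t, a < x -> x < b -> t0 < t -> t <= T -> is_derive t 1 (fun s => F x s) (Ft x t)) ->
  (forall x t, a < x -> x < b -> t0 < t -> t <= T -> Ft x t < Fxx x t) ->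
  (forall t, t0 <= t -> t <= T -> F a t <= 0 /\ F b t <= 0) ->
  (forall x, a <= x -> x <= b -> F x t0 <= 0) ->
  forall x t, a <= x -> x <= b -> t0 <= t -> t <= T -> F x t <= 0.
Proof.
move=> ab tT Fc HFx HFxx HFt Hpde Hlat Hini.
have A0 : (`[a, b] `*` `[t0, T]) !=set0.
  by exists (a, t0); split; rewrite /= in_itv /= lexx ?ab ?tT.
have cA : compact (`[a, b] `*` `[t0, T]).
  by apply: compact_setX; apply: segment_compact.
have [[xc tc] cin Hmax] := compact_EVT_max A0 cA Fc.
move=> x t ax xb t0t tT'.
have : F x t <= F xc tc.
  by apply: (Hmax (x, t)); rewrite inE; split; rewrite /= in_itv /= ?ax ?xb ?t0t ?tT'.
move/le_trans; apply.
rewrite leNgt; apply/negP => Fpos.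
move: cin; rewrite inE => -[]; rewrite /= !in_itv /= => /andP[axc xcb] /andP[t0tc tcT].
have xca : a < xc.
  rewrite lt_neqAle axc andbT; apply/eqP => E; subst xc.
  by have := (Hlat tc t0tc tcT).1; rewrite leNgt Fpos.
have xcb' : xc < b.
  rewrite lt_neqAle xcb andbT; apply/eqP => E; subst xc.
  by have := (Hlat tc t0tc tcT).2; rewrite leNgt Fpos.
have tc0 : t0 < tc.
  rewrite lt_neqAle t0tc andbT; apply/eqP => E; subst tc.
  by have := Hini xc axc xcb; rewrite leNgt Fpos.
have H2 : Fxx xc tc <= 0.
  apply: (@max_second (fun y => F y tc) (fun y => Fx y tc) a b xc) => //.
  - by move=> y ay yb; apply: HFx.
  - exact: HFxx.
  - move=> y ay yb; apply: (Hmax (y, tc)); rewrite inE; split;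
    by rewrite /= in_itv /= ?(ltW ay) ?(ltW yb) ?t0tc ?tcT.
have H3 : 0 <= Ft xc tc.
  apply: (@max_left (fun s => F xc s) t0 tc) => //.
  - exact: HFt.
  - move=> s t0s stc; apply: (Hmax (xc, s)); rewrite inE; split;
    rewrite /= in_itv /= ?axc ?xcb ?(ltW t0s) //.
    exact: le_trans stc tcT.
have := Hpde xc tc xca xcb' tc0 tcT.
by rewrite ltNge (le_trans H2 H3).
Qed.
Lemma quad_der (al be ga x : R) :
  is_derive x 1 (fun y : R => al + be * y + ga * (y * y)) (be + ga * (x + x)).
Proof.
have Hid : is_derive x (1:R) (@id R) 1 := is_derive_id x 1.
have H1 : is_derive x (1:R) (cst al) 0 := is_derive_cst al x 1.
have H2 := is_deriveZ be Hid.
have H3 := is_deriveM Hid Hid.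
have H4 := is_deriveZ ga H3.
have H := is_deriveD (is_deriveD H1 H2) H4.
apply: is_derive_eq H _.
by rewrite add0r [be%:A]mulr1 [x%:A]mulr1.
Qed.

Lemma quad_der' (al be ga x d : R) (f : R -> R) :
  (forall y, f y = al + be * y + ga * (y * y)) -> d = be + ga * (x + x) ->
  is_derive x 1 f d.
Proof.
move=> Hf ->; have -> : f = (fun y => al + be * y + ga * (y * y)) by apply: funext.
exact: quad_der.
Qed.
End S.

Section S2.
Variable R : realType.

Lemma cont_edge (u : R -> R -> R) (l0 t0 z : R) : 0 < t0 ->
  {within [set p : R * R | p.1 <= l0 /\ 0 < p.2], continuous (fun p => u p.1 p.2)} ->
  u l0 t0 < z -> exists2 eta : R, 0 < eta & forall x, l0 - eta <= x -> x <= l0 -> u x t0 < z.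
Proof.
move=> t00 Hc Hz.
have := Hc (l0, t0).
move=> /(@cvgr_lt R _ _ _ _ _) /(_ z Hz).
move=> H.
have H' : within [set p : R * R | p.1 <= l0 /\ 0 < p.2] (nbhs (l0, t0)) (fun q : R * R => u q.1 q.2 < z).
  by rewrite nbhs_subspace_in //=; split.
move: H' => /nbhs_ballP [r /= r0 Hr].
exists (r / 2); first by rewrite divr_gt0.
move=> x xl xl0; apply: (Hr (x, t0)); last by split.
split; rewrite /ball /= ?subrr ?normr0 //.
rewrite ger0_norm ?subr_ge0 // (@le_lt_trans _ _ (r / 2)) //; first by rewrite lerBlDl -lerBlDr.
by rewrite ltr_pdivrMr // ltr_pMr // ltr1n.
Qed.

Definition gb (mu s : R) := expR (- (mu * (s - 1))).
Definition hb (l0 L y : R) := (l0 - y) * (2 * L - (l0 - y)).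
Definition phib (c eps k1 A mu l0 L y s : R) := c + eps + k1 * (l0 - y) + A * gb mu s * hb l0 L y.
Definition phix (k1 A mu l0 L y s : R) :=
  (- k1 + A * gb mu s * (2 * l0 - 2 * L)) + (- (A * gb mu s)) * (y + y).

Lemma phib_dx (c eps k1 A mu l0 L y s : R) :
  is_derive y 1 (fun z => phib c eps k1 A mu l0 L z s) (phix k1 A mu l0 L y s).
Proof.
apply: (@quad_der' _ (c + eps + k1 * l0 + A * gb mu s * (l0 * (2 * L - l0)))
   (- k1 + A * gb mu s * (2 * l0 - 2 * L)) (- (A * gb mu s))) => //.
by move=> z; rewrite /phib /hb; ring.
Qed.

Lemma phib_dxx (k1 A mu l0 L y s : R) :
  is_derive y 1 (fun z => phix k1 A mu l0 L z s) (- 2 * (A * gb mu s)).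
Proof.
apply: (@quad_der' _ (- k1 + A * gb mu s * (2 * l0 - 2 * L)) (- 2 * (A * gb mu s)) 0).
  by move=> z; rewrite /phix; ring.
ring.
Qed.

Lemma phib_dt (c eps k1 A mu l0 L y s : R) :
  is_derive s 1 (fun r => phib c eps k1 A mu l0 L y r) (A * hb l0 L y * (gb mu s * - mu)).
Proof.
have Hlin : is_derive s 1 (fun r : R => - (mu * (r - 1))) (- mu).
  by apply: (@quad_der' _ mu (- mu) 0) => [z|]; ring.
have Hc := @is_derive1_comp R expR (fun r : R => - (mu * (r - 1))) s _ _ (is_derive_expR _) Hlin.
have H := is_deriveD (is_derive_cst (c + eps + k1 * (l0 - y)) s 1) (is_deriveZ (A * hb l0 L y) Hc).
have -> : (fun r => phib c eps k1 A mu l0 L y r) =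
  (cst (c + eps + k1 * (l0 - y)) + (A * hb l0 L y) \*: (expR \o (fun r : R => - (mu * (r - 1))))).
  apply: funext => r; rewrite /phib /gb /=.
  change (c + eps + k1 * (l0 - y) + A * expR (- (mu * (r - 1))) * hb l0 L y = c + eps + k1 * (l0 - y) + (A * hb l0 L y) * expR (- (mu * (r - 1)))); ring.
apply: (is_derive_eq H).
by rewrite add0r /gb.
Qed.

Lemma cont_fst (g : R -> R) : continuous g -> continuous (fun p : R * R => g p.1).
Proof. move=> cg p; apply: (continuous_comp (f := fst)); last exact: cg. exact: cvg_fst. Qed.
Lemma cont_snd (g : R -> R) : continuous g -> continuous (fun p : R * R => g p.2).
Proof. move=> cg p; apply: (continuous_comp (f := snd)); last exact: cg. exact: cvg_snd. Qed.

Lemma poly_cont (al be ga : R) (f : R -> R) :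
  (forall y, f y = al + be * y + ga * (y * y)) -> continuous f.
Proof.
move=> Hf y; apply: (@der_cont _ _ _ (be + ga * (y + y))).
exact: quad_der'.
Qed.

Lemma gb_cont (mu : R) : continuous (gb mu).
Proof.
move=> s; apply: (@continuous_comp _ _ _ (fun r : R => - (mu * (r - 1))) expR).
  by apply: (@poly_cont mu (- mu) 0) => z; ring.
exact: continuous_expR.
Qed.

Lemma phib_cont (c eps k1 A mu l0 L : R) :
  continuous (fun p : R * R => phib c eps k1 A mu l0 L p.1 p.2).
Proof.
have P1 : continuous (fun y : R => c + eps + k1 * (l0 - y)).
  by apply: (@poly_cont (c + eps + k1 * l0) (- k1) 0) => y; ring.
have P3 : continuous (hb l0 L).
  by apply: (@poly_cont (l0 * (2 * L - l0)) (2 * l0 - 2 * L) (-1)) => y; rewrite /hb; ring.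
have H1 := @cont_fst _ P1.
have H2 := @cont_snd _ (gb_cont mu).
have H3 := @cont_fst _ P3.
move=> p.
have -> : (fun p : R * R => phib c eps k1 A mu l0 L p.1 p.2) =
   (fun p : R * R => c + eps + k1 * (l0 - p.1)) + (fun p : R * R => A * (gb mu p.2 * hb l0 L p.1)).
  apply: funext => q; rewrite /phib.
  change (c + eps + k1 * (l0 - q.1) + A * gb mu q.2 * hb l0 L q.1 = (c + eps + k1 * (l0 - q.1)) + A * (gb mu q.2 * hb l0 L q.1)); ring.
apply: continuousD; first exact: H1.
apply: (@continuousM _ _ (cst A) (fun p : R * R => gb mu p.2 * hb l0 L p.1)).
  exact: cst_continuous.
apply: (@continuousM _ _ (fun p : R * R => gb mu p.2) (fun p : R * R => hb l0 L p.1)).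
  exact: H2.
exact: H3.
Qed.

Lemma contF (u : R -> R -> R) (ph : R * R -> R) (del : R) (S B : set (R * R)) :
  B `<=` S -> {within S, continuous (fun p : R * R => u p.1 p.2)} -> continuous ph ->
  {within B, continuous (fun p : R * R => u p.1 p.2 - ph p - del * p.2)}.
Proof.
move=> BS Hc Hph.
have Hu' := continuous_subspaceW BS Hc.
have Hp' := continuous_subspaceT (A := B) Hph.
have Hd : continuous (fun p : R * R => del * p.2).
  move=> p; apply: (@continuous_comp _ _ _ snd (fun s : R => del * s)).
    exact: cvg_snd.
  by apply: (@poly_cont 0 del 0) => z; ring.
have Hd' := continuous_subspaceT (A := B) Hd.
move=> p.
apply: (@continuousB _ _ (subspace B) (fun p : R * R => u p.1 p.2 - ph p) (fun p : R * R => del * p.2)); last exact: Hd'.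
apply: (@continuousB _ _ (subspace B) (fun p : R * R => u p.1 p.2) ph); last exact: Hp'.
exact: Hu'.
Qed.

Lemma heat_upper (l0 c K : R) (u ux uxx ut : R -> R -> R) :
  (forall x t : R, x <= l0 -> 0 < t -> `|u x t| <= K) ->
  (forall t : R, 0 < t -> u l0 t = c) ->
  {within [set p : R * R | p.1 <= l0 /\ 0 < p.2], continuous (fun p => u p.1 p.2)} ->
  (forall x t : R, x < l0 -> 0 < t -> is_derive x 1 (fun y => u y t) (ux x t)) ->
  (forall x t : R, x < l0 -> 0 < t -> is_derive x 1 (fun y => ux y t) (uxx x t)) ->
  (forall x t : R, x < l0 -> 0 < t -> is_derive t 1 (fun s => u x s) (ut x t)) ->
  (forall x t : R, x < l0 -> 0 < t -> ut x t = uxx x t) ->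
  forall a eps : R, a <= l0 -> 0 < eps ->
  exists T : R, forall t x : R, T <= t -> a <= x -> x <= l0 -> u x t <= c + 3 * eps.
Proof.
move=> Hb Hl Hc Hux Huxx Hut Heq a eps al0 eps0.
have K0 : 0 <= K by exact: le_trans (normr_ge0 _) (Hb l0 1 (lexx _) ltr01).
have cK : `|c| <= K by rewrite -(Hl 1 ltr01); exact: Hb.
move: cK; rewrite ler_norml => /andP[cK1 cK2].
have [eta eta0 Heta] : exists2 eta : R, 0 < eta & forall x, l0 - eta <= x -> x <= l0 -> u x 1 < c + eps.
  by apply: cont_edge ltr01 Hc _; rewrite Hl ?ltr01 // ltrDl.
have la0 : 0 <= l0 - a by rewrite subr_ge0.
pose q := 4 * K * (l0 - a) / eps.
have q0 : 0 <= q by rewrite /q divr_ge0 ?(ltW eps0) // !mulr_ge0.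
pose L := eta + (l0 - a) + q.
have L0 : 0 < L by rewrite /L; lra.
have Leta : eta <= L by rewrite /L; lra.
have Lla : l0 - a <= L by rewrite /L; lra.
have Lq : q <= L by rewrite /L; lra.
pose k1 := 4 * K / L.
pose A := 2 * K / (eta * L).
pose mu := 2 / (L * L).
have mu0 : 0 < mu by rewrite /mu divr_gt0 ?mulr_gt0.
have A0 : 0 <= A by rewrite /A divr_ge0 ?mulr_ge0 // ltW ?mulr_gt0.
have k10 : 0 <= k1 by rewrite /k1 divr_ge0 ?mulr_ge0 // ltW.
pose T := 1 + A * (L * L) / (eps * mu).
have T1 : 1 <= T.
  rewrite /T lerDl; apply: divr_ge0; last by apply: ltW; exact: mulr_gt0.
  by apply: mulr_ge0 => //; apply: mulr_ge0; exact: ltW.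
exists T => t x Tt ax xl0.
have t1 : 1 <= t by apply: le_trans Tt.
have t0 : 0 < t by apply: lt_le_trans t1.
pose phi y s := phib c eps k1 A mu l0 L y s.
suff Hup : u x t <= phi x t.
  apply: le_trans Hup _; rewrite /phi /phib.
  have H1 : k1 * (l0 - x) <= eps.
    rewrite (@le_trans _ _ (k1 * (l0 - a))) //; first by apply: ler_wpM2l => //; lra.
    move: Lq; rewrite /q ler_pdivrMr // => Lq.
    rewrite /k1 mulrAC ler_pdivrMr //; lra.
  have H2 : A * gb mu t * hb l0 L x <= eps.
    have hb0x : 0 <= hb l0 L x by rewrite /hb; apply: mulr_ge0; lra.
    have hbLx : hb l0 L x <= L * L.
      rewrite /hb -subr_ge0.
      have -> : L * L - (l0 - x) * (2 * L - (l0 - x)) = (L - (l0 - x)) ^+ 2 by ring.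
      exact: sqr_ge0.
    apply: (@le_trans _ _ (A * gb mu t * (L * L))).
      by apply: ler_wpM2l; [exact: mulr_ge0 A0 (ltW (expR_gt0 _)) | exact: hbLx].
    rewrite /gb expRN mulrAC ler_pdivrMr ?expR_gt0 //.
    have E1 := ler_wpM2l (ltW eps0) (expR_ge1Dx (mu * (t - 1))).
    have E2 : A * (L * L) <= (t - 1) * (eps * mu).
      rewrite -ler_pdivrMr; last exact: mulr_gt0 eps0 mu0.
      by move: Tt; rewrite /T; lra.
    nra.
  lra.
apply/ler_addgt0Pr => e e0.
pose del := e / t.
have del0 : 0 < del by rewrite /del divr_gt0.
have hbL y : hb l0 L y <= L * L.
  rewrite /hb -subr_ge0.
  have -> : L * L - (l0 - y) * (2 * L - (l0 - y)) = (L - (l0 - y)) ^+ 2 by ring.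
  exact: sqr_ge0.
have hb0 y : 0 <= l0 - y -> l0 - y <= L -> 0 <= hb l0 L y.
  by move=> h1 h2; rewrite /hb; apply: mulr_ge0 => //; lra.
have gb0 s : 0 < gb mu s by exact: expR_gt0.
have Hcont : {within `[l0 - L, l0] `*` `[1, t], continuous (fun p : R * R => u p.1 p.2 - phi p.1 p.2 - del * p.2)}.
  have sub : `[l0 - L, l0] `*` `[1, t] `<=` [set p : R * R | p.1 <= l0 /\ 0 < p.2].
    move=> [y s] [] /=; rewrite !in_itv /= => /andP[_ ->] /andP[s1 _]; split => //.
    exact: lt_le_trans s1.
  apply: (@contF u (fun p : R * R => phi p.1 p.2) del _ _ sub Hc).
  exact: phib_cont.
have HFx : forall x0 t2 : R, l0 - L < x0 -> x0 < l0 -> 1 < t2 -> t2 <= t ->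
    is_derive x0 1 (fun y => u y t2 - phi y t2 - del * t2) (ux x0 t2 - phix k1 A mu l0 L x0 t2).
  move=> x0 t2 h1 h2 h3 h4.
  apply: (is_derive_eq (is_deriveB (is_deriveB (Hux x0 t2 h2 (lt_trans ltr01 h3)) (phib_dx c eps k1 A mu l0 L x0 t2)) (is_derive_cst (del * t2) x0 1))).
  by rewrite subr0.
have HFxx : forall x0 t2 : R, l0 - L < x0 -> x0 < l0 -> 1 < t2 -> t2 <= t ->
    is_derive x0 1 (fun y => ux y t2 - phix k1 A mu l0 L y t2) (uxx x0 t2 + 2 * (A * gb mu t2)).
  move=> x0 t2 h1 h2 h3 h4.
  apply: (is_derive_eq (is_deriveB (Huxx x0 t2 h2 (lt_trans ltr01 h3)) (phib_dxx k1 A mu l0 L x0 t2))).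
  ring.
have HFt : forall x0 t2 : R, l0 - L < x0 -> x0 < l0 -> 1 < t2 -> t2 <= t ->
    is_derive t2 1 (fun s => u x0 s - phi x0 s - del * s) (ut x0 t2 - A * hb l0 L x0 * (gb mu t2 * - mu) - del).
  move=> x0 t2 h1 h2 h3 h4.
  apply: (is_derive_eq (is_deriveB (is_deriveB (Hut x0 t2 h2 (lt_trans ltr01 h3)) (phib_dt c eps k1 A mu l0 L x0 t2)) (is_deriveZ del (is_derive_id t2 1)))).
  by rewrite [del *: 1]mulr1.
have Hpde : forall x0 t2 : R, l0 - L < x0 -> x0 < l0 -> 1 < t2 -> t2 <= t ->
    ut x0 t2 - A * hb l0 L x0 * (gb mu t2 * - mu) - del < uxx x0 t2 + 2 * (A * gb mu t2).
  move=> x0 t2 h1 h2 h3 h4.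
  rewrite Heq //; last exact: lt_trans ltr01 h3.
  have Hm : hb l0 L x0 * mu <= 2.
    rewrite /mu mulrA ler_pdivrMr ?mulr_gt0 //.
    by rewrite (@le_trans _ _ (L * L * 2)) // ?ler_wpM2r // mulrC.
  have AG : 0 <= A * gb mu t2 by rewrite mulr_ge0 // ltW.
  have := ler_wpM2l AG Hm.
  nra.
have Hlat : forall t2 : R, 1 <= t2 -> t2 <= t ->
    u (l0 - L) t2 - phi (l0 - L) t2 - del * t2 <= 0 /\ u l0 t2 - phi l0 t2 - del * t2 <= 0.
  move=> t2 h1 h2.
  have t20 : 0 < t2 by exact: lt_le_trans ltr01 h1.
  have dt : 0 <= del * t2 by rewrite mulr_ge0 // ltW.
  split.
    have := Hb (l0 - L) t2 _ t20; rewrite ?gerBl ?(ltW L0) // => /(_ isT).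
    rewrite ler_norml => /andP[_ uK].
    have k1L : k1 * (l0 - (l0 - L)) = 4 * K by rewrite opprB addrC subrK /k1 divfK // gt_eqF.
    have hp : 0 <= A * gb mu t2 * hb l0 L (l0 - L).
      apply: mulr_ge0; first by rewrite mulr_ge0 // ltW.
      apply: hb0; lra.
    rewrite /phi /phib k1L; lra.
  rewrite Hl // /phi /phib /hb subrr !mul0r mulr0 addr0; lra.
have Hini : forall x0 : R, l0 - L <= x0 -> x0 <= l0 -> u x0 1 - phi x0 1 - del * 1 <= 0.
  move=> x0 h1 h2.
  have g1 : gb mu 1 = 1 by rewrite /gb subrr mulr0 oppr0 expR0.
  rewrite /phi /phib g1 mulr1.
  have y0 : 0 <= l0 - x0 by rewrite subr_ge0.
  have yL : l0 - x0 <= L by rewrite lerBlDl -lerBlDr.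
  have ky : 0 <= k1 * (l0 - x0) by rewrite mulr_ge0.
  have Ah : 0 <= A * hb l0 L x0 by rewrite mulr_ge0 // hb0.
  have d1 : 0 <= del * 1 by rewrite mulr1 ltW.
  have [ye|ey] := leP (l0 - x0) eta.
    have := Heta x0 _ h2; rewrite lerBlDl -lerBlDr => /(_ ye) ?; lra.
  have uK : u x0 1 <= K.
    by have := Hb x0 1 h2 ltr01; rewrite ler_norml => /andP[].
  have Ah2 : 2 * K <= A * hb l0 L x0.
    have hy : eta * L <= hb l0 L x0.
      rewrite /hb (@le_trans _ _ ((l0 - x0) * L)) //; first by rewrite ler_wpM2r // ?ltW.
      by rewrite ler_wpM2l //; lra.
    rewrite (@le_trans _ _ (A * (eta * L))) //; last by rewrite ler_wpM2l.
    by rewrite /A divfK // gt_eqF // mulr_gt0.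
  lra.
have := @comparison _ (fun y s => u y s - phi y s - del * s)
  (fun y s => ux y s - phix k1 A mu l0 L y s)
  (fun y s => uxx y s + 2 * (A * gb mu s))
  (fun y s => ut y s - A * hb l0 L y * (gb mu s * - mu) - del)
  (l0 - L) l0 1 t _ t1.
have aL : l0 - L <= l0 by rewrite gerBl ltW.
have xL : l0 - L <= x by rewrite (le_trans _ ax) // lerBlDl -lerBlDr.
move=> /(_ aL Hcont HFx HFxx HFt Hpde Hlat Hini x t xL xl0 t1 (lexx t)).
rewrite /del divfK ?gt_eqF //; lra.
Qed.
End S2.

Theorem lemma3p3 (R : realType) (M delta0 l0 : R) (w0 : R -> R) (w : R -> R -> R)
  (hM : 0 < M) (hdelta0 : 0 < delta0)
  (hw0 : Linfty_halfline l0 w0) (hw0neg : vanishes_at_minus_infty w0)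
  (hw : is_bounded_solution M l0 delta0 w0 w) :
  loc_unif_cvg_halfline l0 w delta0.
Proof.
move: hw => [[C hC] hpde hcont hbd _].
pose u x t := expR (- (M * w x t)).
pose c := expR (- (M * delta0)).
pose K := expR (M * C).
pose d2 x t := derive1 (fun y => dx w y t) x.
pose wt x t := derive1 (fun s => w x s) t.
have Hwx : forall y t : R, y < l0 -> 0 < t -> is_derive y 1 (fun z => w z t) (dx w y t).
  move=> y t h1 h2; have [d1 _ _ _ _] := hpde y t h1 h2.
  by rewrite /dx derive1E; exact: derivableP.
have Hwxx : forall y t : R, y < l0 -> 0 < t -> is_derive y 1 (fun z => dx w z t) (d2 y t).
  move=> y t h1 h2; have [_ _ d1 _ _] := hpde y t h1 h2.
  by rewrite /d2 derive1E; exact: derivableP.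
have Hwt : forall y t : R, y < l0 -> 0 < t -> is_derive t 1 (fun s => w y s) (wt y t).
  move=> y t h1 h2; have [_ _ _ d1 _] := hpde y t h1 h2.
  by rewrite /wt derive1E; exact: derivableP.
have Hpde : forall y t : R, y < l0 -> 0 < t -> wt y t = d2 y t - M * (dx w y t) ^+ 2.
  move=> y t h1 h2; have [_ _ _ _ E] := hpde y t h1 h2; by rewrite /wt E.
pose ux x t := u x t * (- (M * dx w x t)).
pose uxx x t := u x t * (- (M * d2 x t)) + (- (M * dx w x t)) * ux x t.
pose ut x t := u x t * (- (M * wt x t)).
have Hux : forall x t : R, x < l0 -> 0 < t -> is_derive x 1 (fun y => u y t) (ux x t).
  move=> x t h1 h2.
  have H := @is_derive1_comp R expR (fun y => - (M * w y t)) x _ _ (is_derive_expR _)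
    (is_deriveN (is_deriveZ M (Hwx x t h1 h2))).
  exact: (is_derive_eq H).
have Huxx : forall x t : R, x < l0 -> 0 < t -> is_derive x 1 (fun y => ux y t) (uxx x t).
  move=> x t h1 h2.
  have H := is_deriveM (Hux x t h1 h2) (is_deriveN (is_deriveZ M (Hwxx x t h1 h2))).
  apply: (is_derive_eq H); rewrite /uxx /=.
  change (u x t * (- (M * d2 x t)) + (- (M * dx w x t)) * ux x t = u x t * (- (M * d2 x t)) + (- (M * dx w x t)) * ux x t).
  by [].
have Hut : forall x t : R, x < l0 -> 0 < t -> is_derive t 1 (fun s => u x s) (ut x t).
  move=> x t h1 h2.
  have H := @is_derive1_comp R expR (fun s => - (M * w x s)) t _ _ (is_derive_expR _)
    (is_deriveN (is_deriveZ M (Hwt x t h1 h2))).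
  exact: (is_derive_eq H).
have Heq : forall x t : R, x < l0 -> 0 < t -> ut x t = uxx x t.
  move=> x t h1 h2; rewrite /ut /uxx /ux Hpde //; ring.
have Hb : forall x t : R, x <= l0 -> 0 < t -> `|u x t| <= K.
  move=> x t h1 h2; rewrite ger0_norm ?expR_ge0 // /u /K ler_expR.
  have := hC x t h1 (ltW h2); rewrite ler_norml => /andP[h3 h4].
  by rewrite -mulrN ler_pM2l // lerNl.
have Hl : forall t : R, 0 < t -> u l0 t = c by move=> t h; rewrite /u /c hbd // ltW.
have Hc : {within [set p : R * R | p.1 <= l0 /\ 0 < p.2], continuous (fun p => u p.1 p.2)}.
  move=> p; apply: (@continuous_comp (subspace [set p : R * R | p.1 <= l0 /\ 0 < p.2]) _ _
     (fun q : R * R => - (M * w q.1 q.2)) expR); last exact: continuous_expR.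
  apply: continuousN.
  apply: (@continuousM _ (subspace [set p : R * R | p.1 <= l0 /\ 0 < p.2]) (cst M) (fun q : R * R => w q.1 q.2)).
    exact: cst_continuous.
  exact: hcont.
have Hb' : forall x t : R, x <= l0 -> 0 < t -> `|(fun x t => - u x t) x t| <= K.
  by move=> x t h1 h2; rewrite /= normrN; exact: Hb.
have Hl' : forall t : R, 0 < t -> (fun x t => - u x t) l0 t = - c by move=> t h /=; rewrite Hl.
have Hc' : {within [set p : R * R | p.1 <= l0 /\ 0 < p.2], continuous (fun p : R * R => - u p.1 p.2)}.
  move=> p; apply: (@continuousN _ _ (subspace [set p : R * R | p.1 <= l0 /\ 0 < p.2]) (fun p : R * R => u p.1 p.2)); exact: Hc.
have Hux' : forall x t : R, x < l0 -> 0 < t -> is_derive x 1 (fun y => (fun x t => - u x t) y t) ((fun x t => - ux x t) x t).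
  by move=> x t h1 h2; exact: is_deriveN (Hux x t h1 h2).
have Huxx' : forall x t : R, x < l0 -> 0 < t -> is_derive x 1 (fun y => (fun x t => - ux x t) y t) ((fun x t => - uxx x t) x t).
  by move=> x t h1 h2; exact: is_deriveN (Huxx x t h1 h2).
have Hut' : forall x t : R, x < l0 -> 0 < t -> is_derive t 1 (fun s => (fun x t => - u x t) x s) ((fun x t => - ut x t) x t).
  by move=> x t h1 h2; exact: is_deriveN (Hut x t h1 h2).
have Heq' : forall x t : R, x < l0 -> 0 < t -> (fun x t => - ut x t) x t = (fun x t => - uxx x t) x t.
  by move=> x t h1 h2 /=; rewrite Heq.
move=> a al0 eps eps0.
pose lo := expR (- (M * (delta0 + eps))).
pose hi := expR (- (M * (delta0 - eps))).
have clo : lo < c by rewrite /lo /c ltr_expR ltrN2 ltr_pM2l // ltrDl.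
have chi : c < hi by rewrite /hi /c ltr_expR ltrN2 ltr_pM2l // gtrBl.
pose e1 := Num.min (c - lo) (hi - c) / 6.
have e10 : 0 < e1 by rewrite /e1 divr_gt0 // lt_min !subr_gt0 clo chi.
have e1a : 3 * e1 < c - lo.
  rewrite /e1 (@lt_le_trans _ _ (Num.min (c - lo) (hi - c))) ?ge_min ?lexx //.
  have m0 : 0 < Num.min (c - lo) (hi - c) by rewrite lt_min !subr_gt0 clo chi.
  lra.
have e1b : 3 * e1 < hi - c.
  rewrite /e1 (@lt_le_trans _ _ (Num.min (c - lo) (hi - c))) ?ge_min ?lexx ?orbT //.
  have m0 : 0 < Num.min (c - lo) (hi - c) by rewrite lt_min !subr_gt0 clo chi.
  lra.
have [T1 HT1] := @heat_upper R l0 c K u ux uxx ut Hb Hl Hc Hux Huxx Hut Heq a e1 al0 e10.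
have [T2 HT2] := @heat_upper R l0 (- c) K (fun x t => - u x t) (fun x t => - ux x t) (fun x t => - uxx x t) (fun x t => - ut x t) Hb' Hl' Hc' Hux' Huxx' Hut' Heq' a e1 al0 e10.
exists (Num.max T1 T2) => t Tt x ax xl0.
have hT1 : T1 <= t by apply: le_trans Tt; rewrite le_max lexx.
have hT2 : T2 <= t by apply: le_trans Tt; rewrite le_max lexx orbT.
have h1 := HT1 t x hT1 ax xl0.
have h2 := HT2 t x hT2 ax xl0.
rewrite /= in h2.
have uhi : u x t < hi by lra.
have ulo : lo < u x t by lra.
rewrite /u /hi ltr_expR ltrN2 ltr_pM2l // in uhi.
rewrite /u /lo ltr_expR ltrN2 ltr_pM2l // in ulo.
rewrite ltr_norml; apply/andP; split; lra.
Qed.
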